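(* Let $K$ be a field of characteristic not equal to $2$ and let $S$ be a (unital, not necessarily associative) $K$-algebra with a pseudo-degree function $\chi$. If $a\in N(S)$ satisfies $\chi(a)=m>0$ and $C_S(a)$ satisfies condition $D(1)$, then $C_S(a)$ has a finite basis as a (left) $K[a]$-module, and the cardinality of this basis divides $m$.
   Context: All algebras are unital but not necessarily associative, and $K$ is embedded in $S$ via the unit. The nucleus $N(S)$ is the set of $x\in S$ with $x(yz)=(xy)z$, $(yx)z=y(xz)$ and $(yz)x=y(zx)$ for all $y,z\in S$. $C_S(a)$ denotes the set of elements of $S$ commuting with $a$, and $K[a]$ the subalgebra generated by $a$. A pseudo-degree function on $S$ is a map $\chi:S\to\mathbb{Z}\cup\{-\infty\}$ such that $\chi(x)=-\infty$ iff $x=0$; $\chi(xy)=\chi(x)+\chi(y)$; and $\chi(x+y)\le\max(\chi(x),\chi(y))$ for all $x,y\in S$. A subalgebra $B\subseteq S$ satisfies condition $D(1)$ if $\chi(x)\ge0$ for all nonzero $x\in B$, and whenever $b_1,b_2\in B$ satisfy $\chi(b_1)=\chi(b_2)$, there exist $\alpha_1,\alpha_2\in K$, not both zero, with $\chi(\alpha_1b_1+\alpha_2b_2)<\chi(b_1)$. *)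

(* Defs.v *)
From HB Require Import structures.
From mathcomp Require Import all_boot all_order all_algebra.
Set Implicit Arguments. Unset Strict Implicit. Unset Printing Implicit Defensive.
Import Order.TTheory GRing.Theory Num.Theory.
Local Open Scope ring_scope.

(* Values of a pseudo-degree function: Z \cup {-oo}, with None = -oo. *)
Definition dle (u v : option int) : bool :=
  match u, v with
  | None, _ => true
  | Some _, None => false
  | Some a, Some b => a <= b
  end.
Definition dlt (u v : option int) : bool := dle u v && (u != v).
Definition dmax (u v : option int) : option int := if dle u v then v else u.
Definition dadd (u v : option int) : option int :=
  match u, v with
  | Some a, Some b => Some (a + b)
  | _, _ => None
  end.

Section NAlg.
Variables (K : fieldType) (S : lmodType K) (mul : S -> S -> S) (one : S).

(* S with mul and one is a unital, not necessarily associative K-algebra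
   (K embedded via k |-> k *: one). *)
Definition is_unital_algebra : Prop :=
  [/\ forall k x y z, mul (k *: x + y) z = k *: mul x z + mul y z,
      forall k x y z, mul z (k *: x + y) = k *: mul z x + mul z y,
      forall x, mul one x = x &
      forall x, mul x one = x].

Definition is_pseudo_degree (chi : S -> option int) : Prop :=
  [/\ forall x, chi x = None <-> x = 0,
      forall x y, chi (mul x y) = dadd (chi x) (chi y) &
      forall x y, dle (chi (x + y)) (dmax (chi x) (chi y))].

Definition in_nucleus (x : S) : Prop :=
  [/\ forall y z, mul x (mul y z) = mul (mul x y) z,
      forall y z, mul (mul y x) z = mul y (mul x z) &
      forall y z, mul (mul y z) x = mul y (mul z x)].

Definition centralizer (a : S) (x : S) : Prop := mul x a = mul a x.

Definition is_subalgebra (P : S -> Prop) : Prop :=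
  [/\ P one,
      forall k x y, P x -> P y -> P (k *: x + y) &
      forall x y, P x -> P y -> P (mul x y)].

Definition gen_subalg (a : S) (x : S) : Prop :=
  forall P : S -> Prop, is_subalgebra P -> P a -> P x.

Definition condD1 (chi : S -> option int) (B : S -> Prop) : Prop :=
  (forall x, B x -> x != 0 -> dle (Some 0) (chi x)) /\
  (forall b1 b2, B b1 -> B b2 -> b1 != 0 -> b2 != 0 -> chi b1 = chi b2 ->
     exists al1 al2 : K, (al1 != 0 \/ al2 != 0) /\
       dlt (chi (al1 *: b1 + al2 *: b2)) (chi b1)).

Definition is_left_basis (R M : S -> Prop) (n : nat) (c : 'I_n -> S) : Prop :=
  [/\ forall i, M (c i),
      forall x, M x -> exists b : 'I_n -> S,
          (forall i, R (b i)) /\ x = \sum_(i < n) mul (b i) (c i) &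
      forall b : 'I_n -> S, (forall i, R (b i)) ->
          \sum_(i < n) mul (b i) (c i) = 0 -> forall i, b i = 0].

End NAlg.

(* Main.v *)
Require Import Defs.
From HB Require Import structures.
From mathcomp Require Import all_boot all_order all_algebra all_fingroup zify.
From Stdlib Require Import ClassicalEpsilon.
Import Order.TTheory GRing.Theory Num.Theory.
Local Open Scope ring_scope.
Set Implicit Arguments. Unset Strict Implicit.

Lemma dle_refl u : dle u u.
Proof. by case: u => [a|] //=. Qed.
Lemma dle_trans u v w : dle u v -> dle v w -> dle u w.
Proof. case: u => [a|]; case: v => [b|]; case: w => [c|] //=; lia. Qed.
Lemma dle_total u v : dle u v || dle v u.
Proof. case: u => [a|]; case: v => [b|] //=; lia. Qed.
Lemma dle_anti u v : dle u v -> dle v u -> u = v.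
Proof. case: u => [a|]; case: v => [b|] //= h1 h2; congr Some; lia. Qed.
Lemma dltNge u v : dlt u v = ~~ dle v u.
Proof. rewrite /dlt; case: u => [a|]; case: v => [b|] //=.
have [->|ne] := eqVneq a b. by rewrite eqxx /=; lia.
have : Some a != Some b by apply: contra ne => /eqP [->].
move=> ->; rewrite andbT; lia. Qed.
Lemma dmax_le u v w : dle (dmax u v) w = dle u w && dle v w.
Proof. rewrite /dmax; case: u => [a|]; case: v => [b|]; case: w => [c|] //=; try lia.
all: case: ifP => //=; lia. Qed.
Lemma dle_maxl u v : dle u (dmax u v).
Proof. rewrite /dmax; case: ifP => // _; exact: dle_refl. Qed.
Lemma dle_maxr u v : dle v (dmax u v).
Proof. rewrite /dmax; case: ifP => [_|]; first exact: dle_refl.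
by move/negbT; have := dle_total u v; case: (dle u v). Qed.
Definition classicb (P : Prop) : bool := if excluded_middle_informative P then true else false.
Lemma classicbP (P : Prop) : classicb P <-> P.
Proof. by rewrite /classicb; case: excluded_middle_informative. Qed.

Lemma ex_min (Q : nat -> Prop) : (exists n, Q n) -> exists n, Q n /\ forall k, Q k -> (n <= k)%N.
Proof. move=> [n Qn]; elim: n {-2}n (leqnn n) Qn => [|N IH] n hn Qn.
  by exists n; split => // k _; move: hn; rewrite leqn0 => /eqP ->.
case: (classic (exists k, (k < n)%N /\ Q k)) => [[k [hk Qk]]|hno].
  by apply: (IH k) => //; rewrite -ltnS (leq_trans hk hn).
exists n; split => // k Qk; rewrite leqNgt; apply/negP => hk; apply: hno; by exists k. Qed.

Lemma card_sub_dvd M (H : {set 'I_M}) : (0 < M)%N ->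
  (forall r : 'I_M, val r = 0%N -> r \in H) ->
  (forall r s t : 'I_M, r \in H -> s \in H -> val t = ((r + s) %% M)%N -> t \in H) ->
  (#|H| %| M)%N.
Proof. case: M H => // M H _ h0 hadd.
have gH : group_set H.
  apply/andP; split; first by apply: h0.
  by apply/subsetP => z /mulsgP [x y hx hy ->]; apply: hadd hx hy _.
by have := cardSg (subsetT (Group gH)); rewrite cardsT card_ord. Qed.

Section Main.
Variables (K : fieldType) (S : lmodType K) (mul : S -> S -> S) (one : S).
Variables (chi : S -> option int) (a : S) (m : nat).
Hypothesis HA : is_unital_algebra mul one.
Hypothesis HP : is_pseudo_degree mul chi.
Hypothesis HN : in_nucleus mul a.
Hypothesis Ha : chi a = Some (m%:Z).
Hypothesis Hm : (0 < m)%N.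
Hypothesis HD : condD1 chi (centralizer mul a).

Let C := centralizer mul a.

Lemma mulDl k x y z : mul (k *: x + y) z = k *: mul x z + mul y z.
Proof. by case: HA. Qed.
Lemma mulDr k x y z : mul z (k *: x + y) = k *: mul z x + mul z y.
Proof. by case: HA. Qed.
Lemma mul1x x : mul one x = x. Proof. by case: HA. Qed.
Lemma mulx1 x : mul x one = x. Proof. by case: HA. Qed.
Lemma mul0x x : mul 0 x = 0.
Proof. have := mulDl 1 0 0 x; rewrite !scale1r !addr0 => h.
by apply: (addIr (mul 0 x)); rewrite -h add0r. Qed.
Lemma mulx0 x : mul x 0 = 0.
Proof. have := mulDr 1 0 0 x; rewrite !scale1r !addr0 => h.
by apply: (addIr (mul x 0)); rewrite -h add0r. Qed.
Lemma mulZl k x z : mul (k *: x) z = k *: mul x z.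
Proof. by have := mulDl k x 0 z; rewrite addr0 mul0x addr0. Qed.
Lemma mulZr k x z : mul z (k *: x) = k *: mul z x.
Proof. by have := mulDr k x 0 z; rewrite addr0 mulx0 addr0. Qed.
Lemma mulAl x y z : mul (x + y) z = mul x z + mul y z.
Proof. by have := mulDl 1 x y z; rewrite !scale1r. Qed.
Lemma mulAr x y z : mul z (x + y) = mul z x + mul z y.
Proof. by have := mulDr 1 x y z; rewrite !scale1r. Qed.
Lemma mul_suml (I : Type) (r : seq I) (P : pred I) (F : I -> S) z :
  mul (\sum_(i <- r | P i) F i) z = \sum_(i <- r | P i) mul (F i) z.
Proof. elim/big_rec2: _ => [|i y1 y2 _ <-]; [exact: mul0x | exact: mulAl]. Qed.
Lemma mul_sumr (I : Type) (r : seq I) (P : pred I) (F : I -> S) z :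
  mul z (\sum_(i <- r | P i) F i) = \sum_(i <- r | P i) mul z (F i).
Proof. elim/big_rec2: _ => [|i y1 y2 _ <-]; [exact: mulx0 | exact: mulAr]. Qed.

Lemma chi0 : chi 0 = None. Proof. by case: HP => h _ _; apply/h. Qed.
Lemma chiN0 x : x != 0 -> chi x != None.
Proof. by case: HP => h _ _ nx; apply: contra nx => /eqP /h ->. Qed.
Lemma chiM x y : chi (mul x y) = dadd (chi x) (chi y). Proof. by case: HP. Qed.
Lemma chiD x y : dle (chi (x + y)) (dmax (chi x) (chi y)). Proof. by case: HP. Qed.
Lemma chi_eq0 x : (chi x = None) <-> x = 0. Proof. by case: HP. Qed.

Lemma a_neq0 : a != 0.
Proof. by apply/negP => /eqP a0; move: Ha; rewrite a0 chi0. Qed.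
Lemma one_neq0 : one != 0.
Proof. apply/negP => /eqP o0; have := mul1x a; rewrite o0 mul0x => a0.
by move: a_neq0; rewrite -a0 eqxx. Qed.

Lemma C_lin k x y : C x -> C y -> C (k *: x + y).
Proof. rewrite /C /centralizer => hx hy. by rewrite mulDl mulDr hx hy. Qed.
Lemma C_one : C one. Proof. by rewrite /C /centralizer mul1x mulx1. Qed.
Lemma C_a : C a. Proof. by []. Qed.
Lemma C_mul x y : C x -> C y -> C (mul x y).
Proof. rewrite /C /centralizer => hx hy; case: HN => n1 n2 n3.
by rewrite n3 hy -n2 hx n1. Qed.
Lemma C0 : C 0. Proof. by rewrite /C /centralizer mul0x mulx0. Qed.
Lemma CZ k x : C x -> C (k *: x). Proof. by move=> h; rewrite -[_ *: _]addr0; apply: C_lin => //; exact: C0. Qed.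

Lemma chi_one : chi one = Some 0.
Proof. have := chiM one one; rewrite mul1x; have := chiN0 one_neq0.
case: (chi one) => [z|] //= _ [] h; congr Some; lia. Qed.

Lemma chiC_ge0 x : C x -> x != 0 -> exists d : nat, chi x = Some d%:Z.
Proof. case: HD => h _ cx nx; have := h x cx nx; have := chiN0 nx.
case: (chi x) => [z|] //= _ hz; exists `|z|%N; congr Some; lia. Qed.

Lemma chi_Zone k : k != 0 -> chi (k *: one) = Some 0.
Proof. move=> nk.
have n1 : k *: one != 0 by rewrite scaler_eq0 negb_or nk one_neq0.
have n2 : k^-1 *: one != 0 by rewrite scaler_eq0 negb_or invr_eq0 nk one_neq0.
have := chiM (k *: one) (k^-1 *: one); rewrite mulZl mulZr scalerA mulfV // scale1r mul1x chi_one.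
have [d1 ->] := chiC_ge0 (CZ k C_one) n1.
have [d2 ->] := chiC_ge0 (CZ k^-1 C_one) n2.
move=> /= [] h; congr Some; lia. Qed.

Lemma chiZ k x : k != 0 -> chi (k *: x) = chi x.
Proof. move=> nk; have -> : k *: x = mul (k *: one) x by rewrite mulZl mul1x.
rewrite chiM chi_Zone //.
by case: (chi _) => //= z; rewrite add0r. Qed.

Lemma chiNx x : chi (- x) = chi x.
Proof. by rewrite -scaleN1r chiZ // oppr_eq0 oner_eq0. Qed.

Lemma chi_dom x y : dlt (chi y) (chi x) -> chi (x + y) = chi x.
Proof. move=> hlt; apply: dle_anti.
  apply: dle_trans (chiD x y) _; rewrite dmax_le dle_refl /=.
  by move: hlt; rewrite /dlt => /andP [].
have := chiD (x + y) (- y); rewrite addrK chiNx => h.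
move: h hlt; rewrite dltNge.
case: (chi x) => [u|]; case: (chi y) => [v|]; case: (chi (x+y)) => [w|] //=;
 rewrite /dmax /=; repeat case: ifP => //=; lia. Qed.

Lemma chi_sum_le (I : Type) (r : seq I) (P : pred I) (F : I -> S) B :
  (forall i, P i -> dle (chi (F i)) B) -> dle (chi (\sum_(i <- r | P i) F i)) B.
Proof. move=> h; apply: (big_ind (fun x => dle (chi x) B)) => //.
 by rewrite chi0. by move=> x y h1 h2; apply: dle_trans (chiD x y) _; rewrite dmax_le h1 h2. Qed.


Fixpoint pow k := if k is k'.+1 then mul a (pow k') else one.
Lemma C_pow k : C (pow k).
Proof. elim: k => [|k IH] /=; [exact: C_one | exact: C_mul C_a IH]. Qed.
Lemma chi_pow k : chi (pow k) = Some (k * m)%:Z.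
Proof. elim: k => [|k IH] /=; first by rewrite chi_one.
rewrite chiM Ha IH /=; congr Some; lia. Qed.

Definition ev (p : {poly K}) := \sum_(k < size p) p`_k *: pow k.

Lemma ev_wid N (p : {poly K}) : (size p <= N)%N -> ev p = \sum_(k < N) p`_k *: pow k.
Proof. move=> h; rewrite /ev (big_ord_widen N (fun k => p`_k *: pow k) h) big_mkcond.
apply: eq_bigr => i _; case: ifP => // /negbT; rewrite -leqNgt => hi.
by rewrite nth_default // scale0r. Qed.

Lemma ev0 : ev 0 = 0. Proof. by rewrite /ev size_poly0 big_ord0. Qed.

Lemma ev_lin k (p q : {poly K}) : ev (k *: p + q) = k *: ev p + ev q.
Proof. set N := maxn (size p) (size q).
have h1 : (size p <= N)%N by rewrite leq_maxl.
have h2 : (size q <= N)%N by rewrite leq_maxr.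
have h3 : (size (k *: p + q)%R <= N)%N.
  apply: leq_trans (size_polyD _ _) _; rewrite geq_max h2 andbT.
  exact: leq_trans (size_scale_leq _ _) h1.
rewrite (ev_wid h1) (ev_wid h2) (ev_wid h3) scaler_sumr -big_split.
by apply: eq_bigr => i _; rewrite coefD coefZ scalerDl scalerA. Qed.

Lemma evD (p q : {poly K}) : ev (p + q) = ev p + ev q.
Proof. by have := ev_lin 1 p q; rewrite !scale1r. Qed.
Lemma evZ k (p : {poly K}) : ev (k *: p) = k *: ev p.
Proof. by rewrite -[k *: p]addr0 ev_lin ev0 addr0. Qed.
Lemma ev1 : ev 1 = one.
Proof. by rewrite /ev size_poly1 big_ord1 coef1 /= scale1r. Qed.
Lemma evC (c : K) : ev c%:P = c *: one.
Proof. by rewrite -alg_polyC evZ ev1. Qed.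

Lemma ev_mulX (p : {poly K}) : ev (p * 'X) = mul a (ev p).
Proof. have [->|np] := eqVneq p 0; first by rewrite mul0r ev0 mulx0.
rewrite /ev size_mulX // big_ord_recl coefMX /= scale0r add0r mul_sumr.
by apply: eq_bigr => i _; rewrite coefMX /= mulZr. Qed.

Lemma ev_mul (p q : {poly K}) : ev (p * q) = mul (ev p) (ev q).
Proof. elim/poly_ind: p => [|p c IH]; first by rewrite mul0r ev0 mul0x.
have -> : (p * 'X + c%:P) * q = (p * q) * 'X + c *: q by rewrite mulrDl mul_polyC mulrAC.
rewrite evD evZ ev_mulX IH evD ev_mulX evC mulAl mulZl mul1x.
by case: HN => n1 _ _; rewrite n1. Qed.

Lemma evX : ev 'X = a.
Proof. by rewrite -[X in ev X]mul1r ev_mulX ev1 mulx1. Qed.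

Lemma Kpoly_sub : is_subalgebra mul one (fun x => exists p, x = ev p).
Proof. split.
- by exists 1; rewrite ev1.
- by move=> k x y [p ->] [q ->]; exists (k *: p + q); rewrite ev_lin.
- by move=> x y [p ->] [q ->]; exists (p * q); rewrite ev_mul. Qed.

Lemma gen_Kpoly x : gen_subalg mul one a x -> exists p, x = ev p.
Proof. by move=> h; apply: h Kpoly_sub _; exists 'X; rewrite evX. Qed.

Lemma low_deg N (b : nat -> K) : dlt (chi (\sum_(i < N) b i *: pow i)) (Some (N * m)%:Z).
Proof.
have : dle (chi (\sum_(i < N) b i *: pow i)) (Some ((N * m)%:Z - 1)).
  apply: chi_sum_le => i _; have [->|nb] := eqVneq (b i) 0.
    by rewrite scale0r chi0.
  rewrite chiZ // chi_pow /=; have := ltn_ord i; nia.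
rewrite dltNge; case: (chi _) => [z|] //=; lia. Qed.

Lemma chi_ev (p : {poly K}) : p != 0 -> chi (ev p) = Some ((size p).-1 * m)%:Z.
Proof. move=> np; have hs : size p = (size p).-1.+1 by rewrite prednK // size_poly_gt0.
rewrite /ev; move: (size p).-1 hs => N hs; rewrite hs big_ord_recr /= addrC chi_dom.
  rewrite chiZ ?chi_pow //; have := lead_coef_eq0 p; rewrite /lead_coef hs /= => ->; exact: np.
rewrite chiZ ?chi_pow; first exact: (low_deg N (fun i => p`_i)).
by have := lead_coef_eq0 p; rewrite /lead_coef hs /= => ->. Qed.

Lemma gen_deg x : gen_subalg mul one a x -> x = 0 \/ exists k : nat, chi x = Some (k * m)%:Z.
Proof. move=> /gen_Kpoly [p ->]; have [->|np] := eqVneq p 0; first by left; rewrite ev0.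
by right; exists (size p).-1; rewrite chi_ev. Qed.

Lemma gs_lin k x y : gen_subalg mul one a x -> gen_subalg mul one a y -> gen_subalg mul one a (k *: x + y).
Proof. move=> hx hy P hP ha; case: (hP) => _ hl _; apply: hl; [exact: hx | exact: hy]. Qed.
Lemma gs_one : gen_subalg mul one a one. Proof. by move=> P [] . Qed.
Lemma gs_a : gen_subalg mul one a a. Proof. by move=> P. Qed.
Lemma gs_mul x y : gen_subalg mul one a x -> gen_subalg mul one a y -> gen_subalg mul one a (mul x y).
Proof. move=> hx hy P hP ha; case: (hP) => _ _ hm; apply: hm; [exact: hx | exact: hy]. Qed.
Lemma gs0 : gen_subalg mul one a 0.
Proof. by have := gs_lin (-1) gs_one gs_one; rewrite scaleN1r addNr. Qed.
Lemma gsZ k x : gen_subalg mul one a x -> gen_subalg mul one a (k *: x).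
Proof. by move=> h; have := gs_lin k h gs0; rewrite addr0. Qed.
Lemma gsD x y : gen_subalg mul one a x -> gen_subalg mul one a y -> gen_subalg mul one a (x + y).
Proof. by move=> h1 h2; have := gs_lin 1 h1 h2; rewrite scale1r. Qed.
Lemma gs_pow k : gen_subalg mul one a (pow k).
Proof. elim: k => [|k IH] /=; [exact: gs_one | exact: gs_mul gs_a IH]. Qed.


Lemma distinct_sum n (t : 'I_n -> S) :
  (forall i j, t i != 0 -> chi (t i) = chi (t j) -> i = j) ->
  (forall i, dle (chi (t i)) (chi (\sum_i t i))) /\
  (\sum_i t i = 0 \/ exists i, chi (\sum_i t i) = chi (t i)).
Proof.
elim: n t => [|n IH] t ht.
  by split; [case | left; rewrite big_ord0].
rewrite big_ord_recr /=.
pose t' := fun i : 'I_n => t (widen_ord (leqnSn n) i).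
have ht' : forall i j, t' i != 0 -> chi (t' i) = chi (t' j) -> i = j.
  move=> i j nz e; have := ht _ _ nz e => /(congr1 val) /= h; exact: val_inj.
have [IH1 IH2] := IH t' ht'.
have -> : \sum_(i < n) t (widen_ord (leqnSn n) i) = \sum_(i < n) t' i by [].
set s := \sum_(i < n) t' i in IH1 IH2 *.
have hcase : forall i : 'I_n.+1, i = ord_max \/ exists j : 'I_n, i = widen_ord (leqnSn n) j.
  move=> i; have [lt|ge] := ltnP i n.
    by right; exists (Ordinal lt); apply: val_inj.
  by left; apply: val_inj => /=; have := ltn_ord i; lia.
have [eq|ne] := eqVneq (chi s) (chi (t ord_max)).
  have [tm0|tmn] := eqVneq (t ord_max) 0.
    rewrite tm0 addr0; split.
      move=> i; case: (hcase i) => [->|[j ->]]; first by rewrite tm0 chi0.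
      exact: IH1.
    case: IH2 => [->|[j hj]]; first by left.
    by right; exists (widen_ord (leqnSn n) j).
  exfalso; case: IH2 => [s0|[j hj]].
    by move: eq; rewrite s0 chi0 => /esym /chi_eq0 /eqP; rewrite (negbTE tmn).
  have := ht _ _ tmn (etrans (esym eq) hj) => /(congr1 val) /= h.
  by move: (ltn_ord j); rewrite -h ltnn.
case/orP: (dle_total (chi s) (chi (t ord_max))) => hle.
  have hlt : dlt (chi s) (chi (t ord_max)) by rewrite /dlt hle ne.
  rewrite addrC chi_dom //; split.
    move=> i; case: (hcase i) => [->|[j ->]]; first exact: dle_refl.
    exact: dle_trans (IH1 j) hle.
  by right; exists ord_max.
have hlt : dlt (chi (t ord_max)) (chi s) by rewrite /dlt hle eq_sym ne.
rewrite chi_dom //; split.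
  move=> i; case: (hcase i) => [->|[j ->]]; [exact: hle | exact: IH1].
case: IH2 => [s0|[j hj]].
  by move: hlt; rewrite s0 chi0 dltNge; case: (chi _).
by right; exists (widen_ord (leqnSn n) j).
Qed.

Lemma distinct_sum0 n (t : 'I_n -> S) :
  (forall i j, t i != 0 -> chi (t i) = chi (t j) -> i = j) ->
  \sum_i t i = 0 -> forall i, t i = 0.
Proof. move=> ht hs i; have [h1 _] := distinct_sum ht; have := h1 i.
rewrite hs chi0 => h; apply/chi_eq0; move: h; by case: (chi (t i)). Qed.

Lemma main : exists (n : nat) (c : 'I_n -> S),
    is_left_basis mul (gen_subalg mul one a) (centralizer mul a) c /\ (n %| m)%N.
Proof.
pose P (r : 'I_m) := exists x (d : nat), [/\ C x, x != 0, chi x = Some d%:Z & (d %% m)%N = val r].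
pose H := [set r : 'I_m | classicb (P r)].
have inH r : r \in H <-> P r by rewrite inE; exact: classicbP.
have Hdvd : (#|H| %| m)%N.
  apply: card_sub_dvd => //.
  - move=> r r0; apply/inH; exists one, 0%N; split; [exact: C_one|exact: one_neq0|by rewrite chi_one|by rewrite mod0n r0].
  - move=> r s t /inH [x [d [cx nx hx dx]]] /inH [y [e [cy ny hy ey]]] ht; apply/inH.
    have nxy : mul x y != 0.
      by apply/negP => /eqP h; have := chiM x y; rewrite h chi0 hx hy.
    exists (mul x y), (d + e)%N; split.
    + exact: C_mul.
    + exact: nxy.
    + by rewrite chiM hx hy /= PoszD.
    + by rewrite ht -dx -ey modnDm.
pose n := #|H|.
have Hc : forall i : 'I_n, exists x, exists d : nat,
    [/\ C x, x != 0, chi x = Some d%:Z, (d %% m)%N = val (enum_val i) &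
     forall y (e : nat), C y -> y != 0 -> chi y = Some e%:Z -> (e %% m)%N = val (enum_val i) -> (d <= e)%N].
  move=> i; have /inH [x0 [d0 hd0]] := enum_valP i.
  have [d [[x [cx nx hx dx]] hmin]] := ex_min (ex_intro (fun d => exists x, [/\ C x, x != 0, chi x = Some d%:Z & (d %% m)%N = val (enum_val i)]) d0 (ex_intro _ x0 hd0)).
  exists x, d; split => // y e cy ny hy ey; apply: hmin; exists y; split => //.
pose c := fun i => proj1_sig (constructive_indefinite_description _ (Hc i)).
have hc : forall i, exists d : nat,
    [/\ C (c i), c i != 0, chi (c i) = Some d%:Z, (d %% m)%N = val (enum_val i) &
     forall y (e : nat), C y -> y != 0 -> chi y = Some e%:Z -> (e %% m)%N = val (enum_val i) -> (d <= e)%N].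
  move=> i; exact: (proj2_sig (constructive_indefinite_description _ (Hc i))).
have span : forall D x, C x -> dlt (chi x) (Some D%:Z) -> exists b : 'I_n -> S,
    (forall i, gen_subalg mul one a (b i)) /\ x = \sum_(i < n) mul (b i) (c i).
  elim=> [|D IH] x cx hx.
    have [->|nx] := eqVneq x 0.
      exists (fun _ => 0); split; first by move=> _; exact: gs0.
      by rewrite big1 // => i _; rewrite mul0x.
    have [d hd] := chiC_ge0 cx nx; exfalso; move: hx; rewrite hd dltNge /=; lia.
  have [hlt|hge] := boolP (dlt (chi x) (Some D%:Z)); first exact: IH.
  have nx : x != 0 by apply/negP => /eqP x0; move: hge; rewrite x0 chi0.
  have [d hd] := chiC_ge0 cx nx.
  have dD : d = D by move: hx hge; rewrite hd !dltNge /= negbK; lia.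
  subst d.
  have rH : Ordinal (ltn_pmod D Hm) \in H by apply/inH; exists x, D; split.
  set r := Ordinal (ltn_pmod D Hm) in rH.
  have ei : enum_val (enum_rank_in rH r) = r := enum_rankK_in rH rH.
  set i := enum_rank_in rH r in ei.
  have [di [ci nci hci dci hmin]] := hc i.
  rewrite ei in dci hmin.
  have le : (di <= D)%N := hmin x D cx nx hd erefl.
  have hdv : (m %| D - di)%N by rewrite -eqn_mod_dvd // dci.
  have hk : ((D - di) %/ m * m + di)%N = D by rewrite divnK // subnK.
  set k := ((D - di) %/ m)%N in hk.
  pose y := mul (pow k) (c i).
  have cy : C y := C_mul (C_pow k) ci.
  have hy : chi y = Some D%:Z by rewrite /y chiM chi_pow hci /=; congr Some; lia.
  have ny : y != 0 by apply/negP => /eqP y0; move: hy; rewrite y0 chi0.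
  case: HD => _ hD1.
  have [al1 [al2 [hal hlt]]] := hD1 x y cx cy nx ny (etrans hd (esym hy)).
  have nal1 : al1 != 0.
    apply/negP => /eqP a10; move: hlt; rewrite a10 scale0r add0r.
    case: hal => [|h2]; first by rewrite a10 eqxx.
    by rewrite chiZ // hy hd /dlt eqxx andbF.
  pose z := al1 *: x + al2 *: y.
  have cz : C z := C_lin al1 cx (CZ al2 cy).
  have hz' : dlt (chi z) (Some D%:Z) by rewrite -hd.
  have [b' [gb' hz]] := IH z cz hz'.
  exists (fun j => al1^-1 *: b' j + (if j == i then (- (al1^-1 * al2)) *: pow k else 0)).
  split.
    move=> j; apply: gsD; first exact: gsZ.
    by case: (j == i); [exact: gsZ (gs_pow k) | exact: gs0].
  rewrite (eq_bigr (fun j => al1^-1 *: mul (b' j) (c j) + mul (if j == i then (- (al1^-1 * al2)) *: pow k else 0) (c j))); last by move=> j _; rewrite mulAl mulZl.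
  rewrite big_split /= -scaler_sumr -hz (bigD1 i) //= eqxx big1 => [|j /negbTE ->]; last exact: mul0x.
  by rewrite addr0 mulZl -/y /z scalerDr !scalerA mulVf // scale1r scaleNr addrK.
exists n, c; split => //; split.
- by move=> i; have [d [? ? ? ? ?]] := hc i.
- move=> x cx; have [->|nx] := eqVneq x 0.
    by apply: (span 0%N); [exact: C0 | rewrite chi0].
  have [d hd] := chiC_ge0 cx nx; apply: (span d.+1) => //.
  by rewrite hd dltNge /=; lia.
- move=> b gb hsum i.
  pose t := fun j => mul (b j) (c j).
  have ht : forall j j', t j != 0 -> chi (t j) = chi (t j') -> j = j'.
    move=> j j' nt e.
    have nbj : b j != 0 by apply: contra nt; rewrite /t => /eqP ->; rewrite mul0x.
    have [bj0|[kj hkj]] := gen_deg (gb j); first by rewrite bj0 eqxx in nbj.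
    have [dj [_ ncj hcj dcj _]] := hc j.
    have [dj' [_ ncj' hcj' dcj' _]] := hc j'.
    have [bj'0|[kj' hkj']] := gen_deg (gb j').
      by move: e; rewrite /t bj'0 mul0x chi0 chiM hkj hcj.
    move: e; rewrite /t !chiM hkj hcj hkj' hcj' /= => -[] e.
    have e' : (kj * m + dj)%N = (kj' * m + dj')%N by lia.
    have : (dj %% m = dj' %% m)%N by rewrite -(modnMDl kj dj) e' modnMDl.
    by rewrite dcj dcj' => /val_inj /enum_val_inj.
  have ti0 := @distinct_sum0 n t ht hsum i.
  case: (gen_deg (gb i)) => // [[ki hki]].
  have [di [_ _ hci _ _]] := hc i.
  by move: (congr1 chi ti0); rewrite /t chiM hki hci chi0.
Qed.

End Main.

Theorem theorem2p10 (K : fieldType) (S : lmodType K) (mul : S -> S -> S)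
  (one : S) (chi : S -> option int) (a : S) (m : nat) :
  2 \notin [pchar K] ->
  is_unital_algebra mul one ->
  is_pseudo_degree mul chi ->
  in_nucleus mul a ->
  chi a = Some (m%:Z) -> (0 < m)%N ->
  condD1 chi (centralizer mul a) ->
  exists (n : nat) (c : 'I_n -> S),
    is_left_basis mul (gen_subalg mul one a) (centralizer mul a) c /\ (n %| m)%N.
Proof.
move=> _ HA HP HN Ha Hm HD; exact: (main HA HP HN Ha Hm HD).
Qed.
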